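(* There is a constant $C>0$ depending only on $n,\alpha_1,\dots,\alpha_n$ such that for all $R\ge1$, all $f\in L^2(\mathbb{R}^n)$ with $\operatorname{supp}\widehat f\subset B^n_1(0)$ (with the associated sets $X_{\lambda,\eta}$ as in the context), all dyadic $1\le\lambda\le R$ and all dyadic $\eta\ge1$, $$\phi_{X_{\lambda,\eta},n,R}\le C\,\eta^{-1}\max\{1,R^{1-2\alpha}\lambda^{\alpha-1}\}.$$
   Context: Fix $n\ge1$, $\alpha_1,\dots,\alpha_n>0$, $\alpha=\min_j\alpha_j<\tfrac12$. $e^{it\Delta}f(x)=\int_{\mathbb{R}^n}e^{2\pi i x\cdot\xi}e^{4\pi^2 i t|\xi|^2}\widehat f(\xi)\,d\xi$. For $R\ge1$, $\theta(t)=\big(R^{1-2\alpha_1}t^{\alpha_1},\dots,R^{1-2\alpha_n}t^{\alpha_n}\big)$, $0\le t\le R$. A lattice cube is a set $\prod_{i=1}^{n+1}[m_i,m_i+1)\subset\mathbb{R}^{n+1}$ with $m\in\mathbb{Z}^{n+1}$. Given $f$, for each $j\in\mathbb{Z}^n$ with $|j|\le R$ choose $t_j\in[1,R]$ with $\sup_{1<t<R}|e^{it\Delta}f(j+\theta(t))|\le 2|e^{it_j\Delta}f(j+\theta(t_j))|$, and let $\widetilde Q_j$ be the lattice cube containing $(j+\theta(t_j),t_j)$. Set $X=(B^n_R(0)\times[1,R])\cap\bigcup_{|j|\le R}\widetilde Q_j$, and for dyadic $1\le\lambda\le R$, $X_\lambda=X\cap(\mathbb{R}^n\times[\lambda,2\lambda])$.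 For dyadic $\eta\ge1$, $\mathcal F_\eta$ is the collection of lattice cubes $\widetilde Q$ with $\eta\le\#\{y\in B^n_R(0)\cap\mathbb{Z}^n:\widetilde Q=\widetilde Q_y\}<2\eta$, and $X_{\lambda,\eta}=X_\lambda\cap\bigcup_{\widetilde Q\in\mathcal F_\eta}\widetilde Q$. For a union $Y$ of lattice cubes, $1\le\beta\le n+1$ and $R\ge1$, the density is $$\phi_{Y,\beta,R}=\sup\Big\{\frac{\#\{\widetilde Q\subset Y\text{ lattice cube}:\widetilde Q\subset B^{n+1}_r(x',t')\}}{r^\beta}:\ (x',t')\in\mathbb{R}^{n+1},\ r\ge1,\ B^{n+1}_r(x',t')\subset B^{n+1}_R(0)\Big\},$$ where $B^{n+1}_r(x',t')$ is the Euclidean ball in $\mathbb{R}^{n+1}$ of radius $r$ centered at $(x',t')$. *)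

(* Defs.v *)
From HB Require Import structures.
From mathcomp Require Import all_boot all_order all_algebra.
From mathcomp Require Import finmap.
From mathcomp Require Import all_classical all_reals all_analysis.
Set Implicit Arguments. Unset Strict Implicit. Unset Printing Implicit Defensive.
Import Order.TTheory GRing.Theory Num.Theory.
Local Open Scope classical_set_scope.
Local Open Scope ring_scope.

Section Defs.
Variable R : realType.

Definition enorm n (x : 'rV[R]_n) : R := Num.sqrt (\sum_i x ord0 i ^+ 2).
Definition dotv n (x y : 'rV[R]_n) : R := \sum_i x ord0 i * y ord0 i.
(* Euclidean norm on R^{n+1} = R^n x R (space-time points (x,t)) *)
Definition enorm1 n (p : 'rV[R]_n * R) : R :=
  Num.sqrt (\sum_i p.1 ord0 i ^+ 2 + p.2 ^+ 2).
Definition eball1 n (c : 'rV[R]_n * R) (r : R) : set ('rV[R]_n * R) :=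
  [set p | enorm1 (p.1 - c.1, p.2 - c.2) < r].

(* Lebesgue integral over R^n, computed as an iterated integral of the
   one-dimensional Lebesgue measure over the coordinates (by Fubini this is
   the n-dimensional Lebesgue integral for integrable functions).  Points are
   encoded by their coordinate sequence y : nat -> R. *)
Fixpoint iter_int (k : nat) (F : (nat -> R) -> R) (y : nat -> R) : R :=
  match k with
  | 0 => F y
  | k'.+1 => Rintegral (@lebesgue_measure R) setT
      (fun s : R => iter_int k' F (fun i => if i == k' then s else y i))
  end.

Fixpoint iter_inte (k : nat) (F : (nat -> R) -> \bar R) (y : nat -> R)
  : \bar R :=
  match k with
  | 0 => F y
  | k'.+1 => (\int[@lebesgue_measure R]_(s in setT)
      iter_inte k' F (fun i => if i == k' then s else y i))%E
  end.

Definition row_of n (y : nat -> R) : 'rV[R]_n := \row_(i < n) y (val i).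

Definition int_Rn n (g : 'rV[R]_n -> R) : R :=
  iter_int n (fun y => g (@row_of n y)) (fun _ => 0).
Definition inte_Rn n (g : 'rV[R]_n -> \bar R) : \bar R :=
  iter_inte n (fun y => g (@row_of n y)) (fun _ => 0).

Definition rV_boxes n : set (set 'rV[R]_n) :=
  [set B | exists A : 'I_n -> set R,
     (forall i, measurable (A i)) /\ B = [set x : 'rV[R]_n | forall i, A i (x ord0 i)]].
Definition borel_Rn n : set (set 'rV[R]_n) := smallest (sigma_algebra setT) (@rV_boxes n).
Definition borel_measurable_Rn n (g : 'rV[R]_n -> R) : Prop :=
  forall B : set R, measurable B -> @borel_Rn n (g @^-1` B).

(* fhat = g1 + i g2 is (a representative of) the Fourier transform of
   f in L^2(R^n) with supp fhat contained in the unit ball. *)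
Definition fourier_data n (g1 g2 : 'rV[R]_n -> R) : Prop :=
  [/\ borel_measurable_Rn g1, borel_measurable_Rn g2,
      (inte_Rn (fun xi => (g1 xi ^+ 2 + g2 xi ^+ 2)%:E) < +oo)%E &
      forall xi, 1 < enorm xi -> g1 xi = 0 /\ g2 xi = 0].

Definition phase n (x : 'rV[R]_n) (t : R) (xi : 'rV[R]_n) : R :=
  2 * pi * dotv x xi + 4 * pi ^+ 2 * t * enorm xi ^+ 2.
(* real and imaginary parts of e^{it Delta} f (x) *)
Definition schr_re n (g1 g2 : 'rV[R]_n -> R) (x : 'rV[R]_n) (t : R) : R :=
  int_Rn (fun xi => cos (phase x t xi) * g1 xi - sin (phase x t xi) * g2 xi).
Definition schr_im n (g1 g2 : 'rV[R]_n -> R) (x : 'rV[R]_n) (t : R) : R :=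
  int_Rn (fun xi => sin (phase x t xi) * g1 xi + cos (phase x t xi) * g2 xi).
Definition schr_abs n (g1 g2 : 'rV[R]_n -> R) (x : 'rV[R]_n) (t : R) : R :=
  Num.sqrt (schr_re g1 g2 x t ^+ 2 + schr_im g1 g2 x t ^+ 2).

Definition theta n (alpha : 'I_n -> R) (Rr t : R) : 'rV[R]_n :=
  \row_i (Rr `^ (1 - 2 * alpha i) * t `^ alpha i).

(* alpha = min_j alpha_j (the default 1 is irrelevant once min < 1/2) *)
Definition amin n (alpha : 'I_n -> R) : R := \big[Num.min/1]_i alpha i.

Definition intv n (j : 'rV[int]_n) : 'rV[R]_n := map_mx (fun z : int => z%:~R) j.

Definition cube n (m : 'rV[int]_n * int) : set ('rV[R]_n * R) :=
  [set p : 'rV[R]_n * R | (forall i, (m.1 ord0 i)%:~R <= p.1 ord0 i < (m.1 ord0 i)%:~R + 1)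
           /\ (m.2%:~R <= p.2 < m.2%:~R + 1)].
Definition cube_of n (p : 'rV[R]_n * R) : 'rV[int]_n * int :=
  (map_mx (fun x : R => Num.floor x) p.1, Num.floor p.2).

Definition valid_choice n (alpha : 'I_n -> R) (Rr : R)
    (g1 g2 : 'rV[R]_n -> R) (tsel : 'rV[int]_n -> R) : Prop :=
  forall j : 'rV[int]_n, enorm (intv j) <= Rr ->
    (1 <= tsel j <= Rr) /\
    forall t, 1 < t < Rr ->
      schr_abs g1 g2 (intv j + theta alpha Rr t) t
        <= 2 * schr_abs g1 g2 (intv j + theta alpha Rr (tsel j)) (tsel j).

Definition Qt n (alpha : 'I_n -> R) (Rr : R) (tsel : 'rV[int]_n -> R)
    (j : 'rV[int]_n) : 'rV[int]_n * int :=
  cube_of (intv j + theta alpha Rr (tsel j), tsel j).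

Definition Xset n alpha Rr tsel : set ('rV[R]_n * R) :=
  [set p | enorm p.1 < Rr /\ 1 <= p.2 <= Rr /\
           exists j, enorm (intv j) <= Rr /\ cube (@Qt n alpha Rr tsel j) p].
Definition Xl n alpha Rr tsel (lam : R) : set ('rV[R]_n * R) :=
  @Xset n alpha Rr tsel `&` [set p | lam <= p.2 <= 2 * lam].

Definition mult n alpha Rr tsel (m : 'rV[int]_n * int) : nat :=
  #|` fset_set [set y : 'rV[int]_n | enorm (intv y) < Rr /\
                                      @Qt n alpha Rr tsel y = m] |.
Definition in_F n alpha Rr tsel (eta : nat) (m : 'rV[int]_n * int) : Prop :=
  (eta <= @mult n alpha Rr tsel m < 2 * eta)%N.
Definition Xle n alpha Rr tsel (lam : R) (eta : nat) : set ('rV[R]_n * R) :=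
  @Xl n alpha Rr tsel lam `&`
  [set p | exists m, @in_F n alpha Rr tsel eta m /\ cube m p].

Definition ncubes n (Y : set ('rV[R]_n * R)) (c : 'rV[R]_n * R) (r : R) : nat :=
  #|` fset_set [set m : 'rV[int]_n * int | cube m `<=` Y /\ cube m `<=` eball1 c r] |.

Definition density n (Y : set ('rV[R]_n * R)) (beta Rr : R) : \bar R :=
  ereal_sup [set e : \bar R | exists (c : 'rV[R]_n * R) (r : R),
     [/\ 1 <= r, eball1 c r `<=` eball1 (0, 0) Rr &
         e = ((ncubes Y c r)%:R / r `^ beta)%:E]].

End Defs.

(* Main.v *)
Require Import Defs.
From HB Require Import structures.
From mathcomp Require Import all_boot all_order all_algebra.
From mathcomp Require Import finmap.
From mathcomp Require Import all_classical all_reals all_analysis.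
From mathcomp Require Import ring lra.
Import Order.TTheory GRing.Theory Num.Theory.
Import numFieldNormedType.Exports.
Set Implicit Arguments. Unset Strict Implicit.
Local Open Scope classical_set_scope.
Local Open Scope ring_scope.

Section H.
Variable R : realType.

Lemma powR_cbound (p lam c : R) : 0 < p -> 0 < lam -> lam <= c <= 2 * lam ->
  c `^ (p - 1) <= 2 `^ p * lam `^ (p - 1).
Proof.
move=> p0 l0 /andP[lc c2].
have c0 : 0 < c by apply: lt_le_trans lc.
have h2 : 1 <= 2 `^ p :> R.
  by rewrite -[X in X <= _](powRr0 2); apply: ler_powR; [lra| exact: ltW].
have [p1|p1] := lerP p 1.
  have e : p - 1 = - (1 - p) by rewrite opprB.
  rewrite e !powRN.
  have : lam `^ (1 - p) <= c `^ (1 - p).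
    by apply: ge0_ler_powR; rewrite ?nnegrE; [lra|lra|lra|].
  move=> H.
  have lp : 0 < lam `^ (1 - p) by apply: powR_gt0.
  apply: (@le_trans _ _ ((lam `^ (1 - p))^-1)).
    by rewrite lef_pV2 ?posrE // powR_gt0.
  by rewrite ler_peMl // invr_ge0 ltW.
apply: (@le_trans _ _ ((2 * lam) `^ (p - 1))).
  by apply: ge0_ler_powR; rewrite ?nnegrE; lra.
rewrite powRM; [|lra|lra].
apply: ler_wpM2r; first exact: powR_ge0.
by apply: ler_powR; lra.
Qed.

Lemma powR_lip (p lam a b : R) : 0 < p -> 0 < lam ->
  lam <= a <= 2 * lam -> lam <= b <= 2 * lam ->
  `|b `^ p - a `^ p| <= p * 2 `^ p * lam `^ (p - 1) * `|b - a|.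
Proof.
move=> p0 l0.
wlog ab : a b / a <= b.
  move=> W ha hb; case/orP: (le_total a b) => [ab|ba]; first exact: W.
  by rewrite distrC (distrC b); apply: W.
move=> /andP[la a2] /andP[lb b2].
have a0 : 0 < a by apply: lt_le_trans la.
have hd : forall x, x \in `]a, b[ -> is_derive x 1 (fun x : R => x `^ p) (p * x `^ (p - 1)).
  move=> x hx; apply: is_derive1_powR; rewrite in_itv/= in hx; case/andP: hx => hx _; exact: lt_trans hx.
have hc : {within [set` `[a, b]], continuous (fun x : R => x `^ p)}.
  apply: derivable_within_continuous => x hx; apply: derivable_powR.
  rewrite in_itv/= in hx; case/andP: hx => hx _; by rewrite in_itv/= andbT (lt_le_trans a0 hx).
have [c cab ->] := MVT_segment ab hd hc.
rewrite in_itv/= in cab; case/andP: cab => c1 c2.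
rewrite normrM ger0_norm; last by apply: mulr_ge0; [exact: ltW|exact: powR_ge0].
rewrite ger0_norm; last lra.
rewrite -!mulrA ler_wpM2l //; first exact: ltW.
rewrite mulrA ler_wpM2r //; first lra.
by apply: powR_cbound => //; apply/andP; split; lra.
Qed.

Lemma amin_le n (alpha : 'I_n -> R) i : amin alpha <= alpha i.
Proof. by rewrite /amin (bigD1 i) //= ge_min lexx. Qed.

Lemma exch (Rr lam a ai : R) : 1 <= Rr -> 1 <= lam <= Rr -> a <= ai ->
  Rr `^ (1 - 2 * ai) * lam `^ (ai - 1) <= Rr `^ (1 - 2 * a) * lam `^ (a - 1).
Proof.
move=> R1 /andP[l1 lR] aai; set d := ai - a.
have d0 : 0 <= d by rewrite /d subr_ge0.
have e1 : 1 - 2 * ai = (1 - 2 * a) + (- (2 * d)) by rewrite /d; ring.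
have e2 : ai - 1 = (a - 1) + d by rewrite /d; ring.
have E1 : Rr `^ (1 - 2 * ai) = Rr `^ (1 - 2 * a) * Rr `^ (- (2 * d)).
  by rewrite e1 powRD //; apply/implyP => _; apply/eqP; lra.
have E2 : lam `^ (ai - 1) = lam `^ (a - 1) * lam `^ d.
  by rewrite e2 powRD //; apply/implyP => _; apply/eqP; lra.
rewrite E1 E2 mulrACA ler_piMr //.
  by apply: mulr_ge0; exact: powR_ge0.
rewrite powRN.
have h1 : lam `^ d <= Rr `^ d by apply: ge0_ler_powR; rewrite ?nnegrE; lra.
have h2 : Rr `^ d <= Rr `^ (2 * d) by apply: ler_powR; lra.
have h3 : 0 < Rr `^ (2 * d) by apply: powR_gt0; lra.
rewrite mulrC ler_pdivrMr // mul1r; exact: le_trans h2.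
Qed.

Lemma enorm1_coord n (v : 'rV[R]_n * R) r : enorm1 v < r ->
  (forall i, `|v.1 ord0 i| < r) /\ `|v.2| < r.
Proof.
rewrite /enorm1 => h; split.
  move=> i; apply: le_lt_trans h; rewrite -sqrtr_sqr ler_sqrt; last first.
    by apply: addr_ge0; [apply: sumr_ge0 => j _; exact: sqr_ge0|exact: sqr_ge0].
  rewrite (bigD1 i) //= -addrA lerDl.
  by apply: addr_ge0; [apply: sumr_ge0 => j _; exact: sqr_ge0|exact: sqr_ge0].
apply: le_lt_trans h; rewrite -sqrtr_sqr ler_sqrt; last first.
  by apply: addr_ge0; [apply: sumr_ge0 => j _; exact: sqr_ge0|exact: sqr_ge0].
by rewrite lerDr; apply: sumr_ge0 => j _; exact: sqr_ge0.
Qed.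

Lemma mem_fset_setP (T : choiceType) (A : set T) x : x \in fset_set A -> A x.
Proof.
have [fA|nfA] := pselect (finite_set A); first by rewrite in_fset_set // inE.
have -> : fset_set A = fset0.
  by rewrite /fset_set; destruct (pselect (finite_set A)).
by rewrite in_fset0.
Qed.

Lemma cube_of_in n (p : 'rV[R]_n * R) : cube (cube_of p) p.
Proof.
split; last by rewrite /= floor_le /= -intrD1 floorD1_gt.
by move=> i; rewrite /= mxE floor_le /= -intrD1 floorD1_gt.
Qed.

Lemma cube_eq n (m : 'rV[int]_n * int) (p : 'rV[R]_n * R) : cube m p -> m = cube_of p.
Proof.
case: m => m1 m2 [h1 h2]; rewrite /cube_of /=; congr pair.
  apply/rowP => i; rewrite mxE; apply/esym/floor_def.
  by rewrite intrD1; apply: h1.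
by apply/esym/floor_def; rewrite intrD1.
Qed.

Lemma clamp (lam tq t h : R) : 0 < lam -> lam <= t <= 2 * lam -> tq <= t < tq + h ->
  lam <= Num.min (Num.max tq lam) (2 * lam) <= 2 * lam /\
  `|t - Num.min (Num.max tq lam) (2 * lam)| <= h.
Proof.
move=> l0 /andP[h1 h2] /andP[h3 h4].
rewrite maxEle minEle; case: (leP tq lam) => ?; [case: (leP lam (2 * lam)) => ? | case: (leP tq (2 * lam)) => ?];
  (split; [apply/andP; split; lra | rewrite ler_norml; apply/andP; split; lra]).
Qed.
End H.

Lemma count_bound (M Y : choiceType) (T : finType) (f : T -> Y) (key : Y -> M)
  (S : {fset M}) (Ym : M -> set Y) (eta : nat) :
  (forall m, m \in S -> (eta <= #|` fset_set (Ym m)|)%N) ->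
  (forall m y, m \in S -> Ym m y -> key y = m /\ exists x, f x = y) ->
  (eta * #|` S| <= #|T|)%N.
Proof.
move=> Heta HY.
have A m : m \in S -> (eta <= count (fun x => key (f x) == m) (enum T))%N.
  move=> mS; apply: (leq_trans (Heta m mS)).
  rewrite -size_filter.
  have sub : (fset_set (Ym m) `<=` seq_fset tt (map f [seq x <- enum T | key (f x) == m]))%fset.
    apply/fsubsetP => y /mem_fset_setP /(HY _ _ mS) [ky [x fx]].
    rewrite seq_fsetE; apply/mapP; exists x => //.
    by rewrite mem_filter fx ky eqxx mem_enum.
  apply: leq_trans (fsubset_leq_card sub) _.
  by rewrite size_seq_fset (leq_trans (size_undup _)) // size_map.
apply: (@leq_trans (\sum_(m <- S) count (fun x => key (f x) == m) (enum T))).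
  rewrite mulnC -sum1_size big_distrl /= mul1n.
  by rewrite !big_seq; apply: leq_sum => m mS; apply: A.
rewrite [leqRHS]cardE -sum1_size.
rewrite (eq_bigr (fun m => \sum_(x <- enum T | key (f x) == m) 1)); last first.
  by move=> m _; rewrite sum1_count.
rewrite (exchange_big_dep xpredT) //=.
apply: leq_sum => x _.
rewrite sum1_count.
have -> : count (fun m => true && (key (f x) == m)) S = count_mem (key (f x)) S.
  by apply: eq_count => m; rewrite eq_sym.
by rewrite count_uniq_mem ?fset_uniq // leq_b1.
Qed.


Unset Implicit Arguments.
Set Strict Implicit.

Theorem lemma3p7 (R : realType) (n : nat) (alpha : 'I_n -> R) :
  (1 <= n)%N -> (forall i, 0 < alpha i) -> amin alpha < 1 / 2 ->
  exists C : R, 0 < C /\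
  forall (Rr : R) (g1 g2 : 'rV[R]_n -> R) (tsel : 'rV[int]_n -> R),
    1 <= Rr -> fourier_data g1 g2 -> valid_choice alpha Rr g1 g2 tsel ->
    forall k l : nat, (2 ^ k)%:R <= Rr ->
      (density (Xle alpha Rr tsel (2 ^ k)%:R (2 ^ l)) n%:R Rr
        <= (C * ((2 ^ l)%:R)^-1 *
            Num.max 1 (Rr `^ (1 - 2 * amin alpha) *
                       (2 ^ k)%:R `^ (amin alpha - 1)))%:E)%E.
Proof.
move=> n1 apos _.
set a := amin alpha.
pose M : R := \sum_i alpha i * 2 `^ alpha i + 1.
have Mi i : alpha i * 2 `^ alpha i <= M.
  rewrite /M (bigD1 i) //= -addrA lerDl.
  apply: addr_ge0; last lra.
  by apply: sumr_ge0 => j _; apply: mulr_ge0; [exact: ltW|exact: powR_ge0].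
have M1 : 1 <= M.
  rewrite /M lerDr; apply: sumr_ge0 => j _.
  by apply: mulr_ge0; [exact: ltW|exact: powR_ge0].
exists (3 * 6 ^+ n * M); split.
  by apply: mulr_gt0; [apply: mulr_gt0; [lra|apply: exprn_gt0; lra]|lra].
move=> Rr g1 g2 tsel R1 _ _ k l lR.
set lam : R := (2 ^ k)%:R.
set X := Rr `^ (1 - 2 * a) * lam `^ (a - 1).
set Kmax := M * Num.max 1 X.
have l1 : 1 <= lam by rewrite /lam ler1n expn_gt0.
have mx1 : 1 <= Num.max 1 X by rewrite le_max lexx.
have K1 : 1 <= Kmax.
  rewrite /Kmax; apply: (le_trans M1); rewrite ler_peMr //; lra.
apply: ge_ereal_sup => _ [c [r [r1 _ ->]]].
rewrite lee_fin /ncubes.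
set S := fset_set _.
set Q' := `|Num.floor (2 * Kmax)|%N.
set W' := `|Num.floor (4 * r)|.+1%N.
have key : (2 ^ l * #|` S| <= Q'.+1 * W'.+1 ^ n)%N.
  pose h := r / Kmax.
  have h0 : 0 < h by apply: divr_gt0; lra.
  have hK : Kmax * h = r by rewrite /h mulrC divfK //; apply/eqP => /eqP; lra.
  pose tq (q : nat) := c.2 - r + q%:R * h.
  pose sq (q : nat) := Num.min (Num.max (tq q) lam) (2 * lam).
  pose th (i : 'I_n) (t : R) := Rr `^ (1 - 2 * alpha i) * t `^ alpha i.
  pose base (q : nat) (i : 'I_n) := Num.floor (c.1 ord0 i - th i (sq q) - 2 * r).
  pose f := fun x : ('I_Q'.+1 * {ffun 'I_n -> 'I_W'.+1})%type =>
     (\row_(i < n) (base (val x.1) i + ((x.2 i : nat))%:Z)) : 'rV[int]_n.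
  have := @count_bound _ _ _ f (Qt alpha Rr tsel) S
    (fun m : 'rV[int]_n * int => [set y : 'rV[int]_n | enorm (@intv R _ y) < Rr /\ Qt alpha Rr tsel y = m]) (2 ^ l).
  rewrite card_prod card_ffun !card_ord => H; apply: H.
    move=> m /mem_fset_setP [sY sB].
    pose p0 : 'rV[R]_n * R := (@intv R _ m.1, (m.2)%:~R).
    have hp0 : cube m p0.
      split => [i|] /=; last by rewrite lexx ltrDl ltr01.
      by rewrite mxE lexx ltrDl ltr01.
    have [_ [m' [hF hc]]] := sY _ hp0.
    have e : m' = m by rewrite (cube_eq hc) (cube_eq hp0).
    by move: hF; rewrite e /in_F /mult => /andP[].
  move=> m y /mem_fset_setP [sY sB] [ny qy]; split => //.
  set t := tsel y.
  pose p : 'rV[R]_n * R := (@intv R _ y + theta alpha Rr t, t).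
  have hp : cube m p by rewrite -qy; exact: cube_of_in.
  have [[_ /andP[lt t2]] _] := sY _ hp.
  have [hc1 hc2] := enorm1_coord (sB _ hp).
  rewrite /= in hc2.
  have hy i : `|(y ord0 i)%:~R + th i t - c.1 ord0 i| < r.
    by have := hc1 i; rewrite /= !mxE.
  rewrite /= in lt t2.
  have l0 : 0 < lam by lra.
  have [hc2a hc2b] : - r < t - c.2 /\ t - c.2 < r.
    by move: hc2; rewrite ltr_norml => /andP.
  pose u := (t - c.2 + r) / h.
  have u0 : 0 <= u by apply: divr_ge0; lra.
  have u2 : u < 2 * Kmax by rewrite /u ltr_pdivrMr // -mulrA hK; lra.
  pose qz := Num.floor u.
  have qz0 : 0 <= qz by rewrite /qz floor_ge0.
  pose q := `|qz|%N.
  have qe : (q%:R : R) = qz%:~R by rewrite /q natr_absz ger0_norm.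
  have qQ : (q < Q'.+1)%N.
    rewrite ltnS -(ler_nat R) qe /Q' natr_absz ger0_norm ?floor_ge0; last lra.
    by rewrite ler_int; apply: le_floor; lra.
  have tqt : tq q <= t < tq q + h.
    have f1 := floor_le u; have f2 := floorD1_gt u.
    rewrite -/qz intrD1 in f1 f2.
    rewrite /u ler_pdivlMr // in f1; rewrite /u ltr_pdivrMr // mulrDl mul1r in f2.
    rewrite /tq qe; apply/andP; split; lra.
  have [hs ts] := clamp l0 (introT andP (conj lt t2)) tqt.
  have lip i : `|th i t - th i (sq q)| <= r.
    have L := powR_lip (apos i) l0 hs (introT andP (conj lt t2)).
    have E := exch R1 (introT andP (conj l1 lR)) (amin_le alpha i).
    rewrite /th -mulrBr normrM ger0_norm; last exact: powR_ge0.
    set A := Rr `^ (1 - 2 * alpha i) in E *.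
    set P := alpha i * 2 `^ alpha i in L.
    set Lm := lam `^ (alpha i - 1) in L E.
    have A0 : 0 <= A by exact: powR_ge0.
    have P0 : 0 <= P by apply: mulr_ge0; [exact: ltW|exact: powR_ge0].
    have Lm0 : 0 <= Lm by exact: powR_ge0.
    apply: (le_trans (ler_wpM2l A0 L)).
    apply: (le_trans (y := A * (P * Lm * h))).
      by apply: ler_wpM2l => //; apply: ler_wpM2l => //; apply: mulr_ge0.
    have -> : A * (P * Lm * h) = P * (A * Lm) * h by ring.
    rewrite -hK /Kmax; apply: ler_wpM2r; first lra.
    apply: ler_pM => //; first by apply: mulr_ge0.
      exact: Mi.
    by apply: (le_trans E); rewrite le_max lexx orbT.
  pose d i := y ord0 i - base q i.
  have dP i : 0 <= d i /\ (`|d i| < W'.+1)%N.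
    have Hy := hy i; have Hl := lip i.
    move: Hy Hl; rewrite ltr_norml ler_norml => /andP[Hy1 Hy2] /andP[Hl1 Hl2].
    have fz := floor_le (c.1 ord0 i - th i (sq q) - 2 * r).
    have fz2 := floorD1_gt (c.1 ord0 i - th i (sq q) - 2 * r).
    rewrite intrD1 in fz2.
    have dR : ((d i)%:~R : R) = (y ord0 i)%:~R - (base q i)%:~R by rewrite /d intrB.
    rewrite /base in dR.
    have dpos : (0 : R) < (d i)%:~R by rewrite dR; lra.
    have d0 : 0 <= d i by rewrite -(ler0z R) ltW.
    split => //.
    rewrite -(ltr_nat R) natr_absz ger0_norm // /W' -addn1 natrD -addn1 natrD.
    rewrite natr_absz ger0_norm; last by rewrite floor_ge0; lra.
    have f4 := floorD1_gt (4 * r); rewrite intrD1 in f4.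
    rewrite dR; lra.
  exists (inord q, [ffun i => inord `|d i|]).
  apply/rowP => i; rewrite !mxE /= ffunE inordK // inordK; last exact: (dP i).2.
  by rewrite gez0_abs; [rewrite /d addrC subrK | exact: (dP i).1].
have rn : r `^ n%:R = r ^+ n by rewrite powR_mulrn //; lra.
rewrite rn.
have rp : 0 < r ^+ n by apply: exprn_gt0; lra.
have eta0 : 0 < ((2 ^ l)%N%:R : R) by rewrite ltr0n expn_gt0.
have HQ : ((Q'.+1)%:R : R) <= 3 * Kmax.
  rewrite -addn1 natrD /Q' natr_absz ger0_norm; last by rewrite floor_ge0; lra.
  have := floor_le (2 * Kmax); lra.
have HW : ((W'.+1)%:R : R) <= 6 * r.
  rewrite -addn1 natrD /W' -addn1 natrD natr_absz ger0_norm; last by rewrite floor_ge0; lra.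
  have := floor_le (4 * r); lra.
have key' : ((2 ^ l)%N%:R : R) * (#|` S|)%:R <= 3 * Kmax * (6 * r) ^+ n.
  rewrite -natrM; apply: (le_trans (y := ((Q'.+1 * W'.+1 ^ n)%N)%:R)).
    by rewrite ler_nat.
  rewrite natrM natrX; apply: ler_pM => //.
  by apply: lerXn2r; rewrite ?nnegrE //; lra.
rewrite ler_pdivrMr //.
rewrite -(ler_pM2l eta0); apply: (le_trans key').
rewrite le_eqVlt; apply/orP; left; apply/eqP.
rewrite /Kmax exprMn; field.
lra.
Qed.
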